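(* Let $d\ge 2$ and $k_1,k_2\in\{2,\dots,d\}$. Let $C_1\subset\mathbb{S}^{d-1}$ be a $k_1$-tangent cap and $C_2\subset\mathbb{S}^{d-1}$ a $k_2$-tangent cap, and let $\mathcal O_1,\mathcal O_2$ be their orbits under the group generated by the reflections in the coordinate hyperplanes. Suppose $\mathcal O_1\ne\mathcal O_2$ and that the caps in $\mathcal O_1\cup\mathcal O_2$ form a packing (their interiors are pairwise disjoint). Then $$k_1+k_2-d\le\sqrt{(k_1-1)(k_2-1)}-1.$$
   Context: $\mathbb{S}^{d-1}$ is the unit sphere of $\mathbb{E}^d$ centred at the origin, with the standard orthonormal basis $\boldsymbol e_1,\dots,\boldsymbol e_d$. The coordinate greatspheres are $G_i=\{\boldsymbol x\in\mathbb{S}^{d-1}\mid x_i=0\}$. A spherical cap is a closed set $\{\boldsymbol x\in\mathbb{S}^{d-1}\mid \text{spherical distance from }\boldsymbol x\text{ to }\boldsymbol c\le r\}$ with centre $\boldsymbol c\in\mathbb{S}^{d-1}$ and spherical radius $r\in(0,\pi/2)$. A cap is tangent to $G_i$ if it meets $G_i$ only at boundary points of the cap (equivalently, its radius equals the angular distance from its centre to the hyperplane $x_i=0$). For $k\in\{2,\dots,d\}$, a $k$-tangent cap is a spherical cap whose centre lies on the intersection of $d-k$ of the coordinate greatspheres and which is tangent to each of the remaining $k$ coordinate greatspheres. *)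

(* Defs.v *)
From HB Require Import structures.
From mathcomp Require Import all_boot all_order all_algebra.
From mathcomp Require Import all_classical all_reals all_analysis.
Set Implicit Arguments. Unset Strict Implicit. Unset Printing Implicit Defensive.
Import Order.TTheory GRing.Theory Num.Theory.
Local Open Scope ring_scope.
Local Open Scope classical_set_scope.

Section Defs.
Variables (R : realType) (d : nat).
Implicit Types (x y c : 'rV[R]_d) (r : R).

Definition dotp x y : R := \sum_(i < d) x 0 i * y 0 i.

Definition sphere : set 'rV[R]_d := [set x | dotp x x = 1].

Definition sdist x y : R := acos (dotp x y).

Definition cap c r : set 'rV[R]_d := [set x | sphere x /\ sdist x c <= r].

Definition is_cap c r : Prop := sphere c /\ 0 < r /\ r < pi / 2.

(* angular distance from a point c of the sphere to the hyperplane x_i = 0 *)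
Definition dist_to_G (i : 'I_d) c : R := asin `|c 0 i|.

Definition tangent_to_G (i : 'I_d) c r : Prop := r = dist_to_G i c.

Definition k_tangent_cap (k : nat) c r : Prop :=
  is_cap c r /\
  exists S : {set 'I_d}, #|S| = k /\
    (forall i, i \notin S -> c 0 i = 0) /\
    (forall i, i \in S -> tangent_to_G i c r).

Definition reflect_by (s : {set 'I_d}) x : 'rV[R]_d :=
  \row_i (if i \in s then - x 0 i else x 0 i).

(* orbit of a set under the group generated by the coordinate reflections
   (this group consists exactly of the maps reflect_by s) *)
Definition refl_orbit (C : set 'rV[R]_d) : set (set 'rV[R]_d) :=
  [set D | exists s : {set 'I_d}, D = reflect_by s @` C].

Definition sph_interior (A : set 'rV[R]_d) : set 'rV[R]_d :=
  [set x | A x /\ exists e : R, 0 < e /\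
     forall y, sphere y -> dotp (y - x) (y - x) < e -> A y].

Definition packing (F : set (set 'rV[R]_d)) : Prop :=
  forall A B, F A -> F B -> A <> B ->
    sph_interior A `&` sph_interior B = set0.

End Defs.

(* Main.v *)
Require Import Defs.
From HB Require Import structures.
From mathcomp Require Import all_boot all_order all_algebra.
From mathcomp Require Import all_classical all_reals all_analysis.
From mathcomp Require Import ring lra.
Import Order.TTheory GRing.Theory Num.Theory.
Local Open Scope ring_scope.
Local Open Scope classical_set_scope.

Section S.
Variables (R : realType) (d : nat).
Implicit Types (x y z a b c : 'rV[R]_d).

Lemma dotpC x y : dotp x y = dotp y x.
Proof. by apply: eq_bigr => i _; rewrite mulrC. Qed.
Lemma dotpDl x y z : dotp (x + y) z = dotp x z + dotp y z.
Proof. by rewrite /dotp -big_split; apply: eq_bigr => i _; rewrite !mxE mulrDl. Qed.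
Lemma dotpZl (t : R) x y : dotp (t *: x) y = t * dotp x y.
Proof. by rewrite /dotp mulr_sumr; apply: eq_bigr => i _; rewrite !mxE mulrA. Qed.
Lemma dotpNl x y : dotp (- x) y = - dotp x y.
Proof. by rewrite -scaleN1r dotpZl mulN1r. Qed.
Lemma dotpBl x y z : dotp (x - y) z = dotp x z - dotp y z.
Proof. by rewrite dotpDl dotpNl. Qed.
Lemma dotpDr x y z : dotp z (x + y) = dotp z x + dotp z y.
Proof. by rewrite !(dotpC z) dotpDl. Qed.
Lemma dotpZr (t : R) x y : dotp y (t *: x) = t * dotp y x.
Proof. by rewrite !(dotpC y) dotpZl. Qed.
Lemma dotpBr x y z : dotp z (x - y) = dotp z x - dotp z y.
Proof. by rewrite !(dotpC z) dotpBl. Qed.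
Lemma dotp_ge0 x : 0 <= dotp x x.
Proof. by apply: sumr_ge0 => i _; rewrite -expr2 sqr_ge0. Qed.
Lemma coord_sq_le x i : x 0 i ^+ 2 <= dotp x x.
Proof.
rewrite /dotp (bigD1 i) //= expr2 lerDl; apply: sumr_ge0 => j _; by rewrite -expr2 sqr_ge0.
Qed.

Lemma dotp_le1 x y : sphere x -> sphere y -> dotp x y <= 1.
Proof.
rewrite /sphere /= => hx hy.
have := dotp_ge0 (x - y); rewrite dotpBl !dotpBr hx hy (dotpC y x); lra.
Qed.

Lemma dotp_small u a (e : R) : sphere a -> 0 < e -> dotp u u < e ^+ 2 -> `|dotp u a| < e.
Proof.
rewrite /sphere /= => ha he hu.
have h1 := dotp_ge0 (u - e *: a); have h2 := dotp_ge0 (u + e *: a).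
rewrite dotpBl !dotpBr !dotpZl !dotpZr ha (dotpC a u) in h1.
rewrite dotpDl !dotpDr !dotpZl !dotpZr ha (dotpC a u) in h2.
rewrite ltr_norml; apply/andP; split; nra.
Qed.

Definition symd (s t : {set 'I_d}) : {set 'I_d} := finset (fun i => (i \in s) != (i \in t)).

Lemma reflect_invol s x : reflect_by s (reflect_by s x) = x.
Proof. by apply/rowP => i; rewrite !mxE; case: (i \in s); rewrite ?opprK. Qed.

Lemma reflect_dotp s x y : dotp (reflect_by s x) y = dotp x (reflect_by s y).
Proof. by apply: eq_bigr => i _; rewrite !mxE; case: ifP => _; rewrite ?mulNr ?mulrN. Qed.

Lemma reflect_comp s t x : reflect_by s (reflect_by t x) =
  reflect_by (symd s t) x.
Proof.
apply/rowP => i; rewrite !mxE inE.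
by case: (i \in s); case: (i \in t) => //=; rewrite opprK.
Qed.

Lemma reflect_set0 x : reflect_by finset.set0 x = x.
Proof. by apply/rowP => i; rewrite !mxE inE. Qed.

Lemma reflect_cap s c r : reflect_by s @` cap c r = cap (reflect_by s c) r.
Proof.
apply/seteqP; split => y.
- case=> x [hx hd] <-; split.
    by rewrite /sphere /= reflect_dotp reflect_invol.
  by rewrite /sdist reflect_dotp reflect_invol.
- case=> hy hd; exists (reflect_by s y); last by rewrite reflect_invol.
  split; first by rewrite /sphere /= reflect_dotp reflect_invol.
  by move: hd; rewrite /sdist reflect_dotp.
Qed.

Lemma orbit_reflect s (C : set 'rV[R]_d) :
  refl_orbit (reflect_by s @` C) = refl_orbit C.
Proof.
apply/seteqP; split => D [t ->].
- exists (symd t s); rewrite image_comp.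
  by apply: eq_imagel => x _ /=; rewrite reflect_comp.
- exists (symd t s); rewrite image_comp.
  apply: eq_imagel => x _ /=; rewrite reflect_comp; congr reflect_by.
  apply/setP => i; rewrite !inE; by case: (i \in t); case: (i \in s).
Qed.

Lemma acos_le_of (t r : R) : 0 <= r <= pi -> cos r <= t <= 1 -> acos t <= r.
Proof.
move=> /andP[r0 rpi] /andP[ct t1].
have tm : -1 <= t by apply: le_trans ct; apply: cos_geN1.
have t11 : -1 <= t <= 1 by rewrite tm t1.
rewrite leNgt; apply/negP => hlt.
have : cos (acos t) < cos r.
  rewrite ltr_cos // in_itv /= ?acos_ge0 ?acos_lepi ?r0 ?rpi //.
by rewrite acosK ?in_itv //= => /(le_lt_trans ct); rewrite ltxx.
Qed.

Lemma interior_cap a x r : sphere a -> sphere x -> 0 <= r <= pi ->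
  cos r < dotp x a -> sph_interior (cap a r) x.
Proof.
move=> ha hx hr hc.
have capP y : sphere y -> cos r < dotp y a -> cap a r y.
  move=> hy hya; split => //; rewrite /sdist; apply: acos_le_of => //.
  by rewrite (ltW hya) dotp_le1.
split; first exact: capP.
set e := dotp x a - cos r.
have e0 : 0 < e by rewrite subr_gt0.
exists (e ^+ 2); split; first by rewrite exprn_gt0.
move=> y hy hd; apply: capP => //.
have := dotp_small (y - x) a e ha e0 hd; rewrite ltr_norml => /andP[h1 _].
have -> : dotp y a = dotp x a + dotp (y - x) a by rewrite dotpBl; ring.
rewrite /e in h1; lra.
Qed.

Lemma sq_lt (u v : R) : 0 <= u -> 0 < v -> u ^+ 2 < v ^+ 2 -> u < v.
Proof. move=> u0 v0 h; rewrite ltNge; apply/negP => hvu; nra. Qed.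

Lemma sep a b r1 r2 : sphere a -> sphere b -> 0 < r1 < pi / 2 -> 0 < r2 < pi / 2 ->
  sph_interior (cap a r1) `&` sph_interior (cap b r2) = set0 ->
  dotp a b <= cos r1 * cos r2 - sin r1 * sin r2.
Proof.
move=> ha hb h1 h2 hdis; rewrite leNgt; apply/negP => hc.
set c := dotp a b in hc.
set p1 := cos r1 in hc *; set p2 := cos r2 in hc *.
set q1 := sin r1 in hc *; set q2 := sin r2 in hc *.
have pi0 : 0 < pi :> R by exact: pi_gt0.
have hr1 : -(pi/2) < r1 < pi/2 by case/andP: h1 => ? ->; rewrite andbT; lra.
have hr2 : -(pi/2) < r2 < pi/2 by case/andP: h2 => ? ->; rewrite andbT; lra.
have p10 : 0 < p1 by exact: cos_gt0_pihalf.
have p20 : 0 < p2 by exact: cos_gt0_pihalf.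
have q10 : 0 < q1 by exact: sin_gt0_pihalf.
have q20 : 0 < q2 by exact: sin_gt0_pihalf.
have e1 : p1 ^+ 2 = 1 - q1 ^+ 2 by rewrite /p1 /q1 cos2sin2.
have e2 : p2 ^+ 2 = 1 - q2 ^+ 2 by rewrite /p2 /q2 cos2sin2.
have ha' : dotp a a = 1 := ha.
have hb' : dotp b b = 1 := hb.
set y := q2 *: a + q1 *: b.
have ya : dotp y a = q2 + q1 * c.
  by rewrite /y dotpDl !dotpZl ha' (dotpC b a) -/c mulr1.
have yb : dotp y b = q2 * c + q1.
  by rewrite /y dotpDl !dotpZl hb' -/c mulr1.
have yy : dotp y y = q1 ^+ 2 + q2 ^+ 2 + 2 * q1 * q2 * c.
  rewrite {1}/y dotpDl !dotpZl (dotpC a y) (dotpC b y) ya yb; ring.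
have q1le : q1 ^+ 2 <= 1 by rewrite /q1 -(cos2Dsin2 r1) lerDr sqr_ge0.
have q2le : q2 ^+ 2 <= 1 by rewrite /q2 -(cos2Dsin2 r2) lerDr sqr_ge0.
have p1p20 : 0 < p1 * p2 by rewrite mulr_gt0.
have cq : p1 * p2 < c + q1 * q2 by lra.
have cq2 : (p1 * p2) ^+ 2 < (c + q1 * q2) ^+ 2.
  by rewrite ltr_pXn2r // ?qualifE /= ?(ltW p1p20) //; apply: le_trans (ltW cq); exact: ltW.
rewrite exprMn e1 e2 in cq2.
have yapos : 0 < q2 + q1 * c.
  have : - (q1 * q2) < c by lra.
  nra.
have ybpos : 0 < q2 * c + q1 by nra.
have yypos : 0 < dotp y y.
  rewrite yy; nra.
have key1 : p1 ^+ 2 * dotp y y < (q2 + q1 * c) ^+ 2.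
  rewrite -subr_gt0 yy e1.
  have -> : (q2 + q1 * c) ^+ 2 - (1 - q1 ^+ 2) * (q1 ^+ 2 + q2 ^+ 2 + 2 * q1 * q2 * c)
     = q1 ^+ 2 * ((c + q1 * q2) ^+ 2 - (1 - q1 ^+ 2) * (1 - q2 ^+ 2)) by ring.
  by rewrite mulr_gt0 ?exprn_gt0 // subr_gt0.
have key2 : p2 ^+ 2 * dotp y y < (q2 * c + q1) ^+ 2.
  rewrite -subr_gt0 yy e2.
  have -> : (q2 * c + q1) ^+ 2 - (1 - q2 ^+ 2) * (q1 ^+ 2 + q2 ^+ 2 + 2 * q1 * q2 * c)
     = q2 ^+ 2 * ((c + q1 * q2) ^+ 2 - (1 - q1 ^+ 2) * (1 - q2 ^+ 2)) by ring.
  by rewrite mulr_gt0 ?exprn_gt0 // subr_gt0.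
set n := Num.sqrt (dotp y y).
have n0 : 0 < n by rewrite sqrtr_gt0.
have nn : n ^+ 2 = dotp y y by rewrite sqr_sqrtr // ltW.
set x := n^-1 *: y.
have hx : sphere x.
  rewrite /sphere /= /x dotpZl dotpZr -nn; field; exact: lt0r_neq0.
have xa : dotp x a = (q2 + q1 * c) / n by rewrite /x dotpZl ya mulrC.
have xb : dotp x b = (q2 * c + q1) / n by rewrite /x dotpZl yb mulrC.
have in1 : sph_interior (cap a r1) x.
  apply: interior_cap => //; first by case/andP: h1 => /ltW -> /= ?; lra.
  rewrite xa ltr_pdivlMr // -/p1; apply: sq_lt => //.
    by rewrite mulr_ge0 // ltW.
  by rewrite exprMn nn.
have in2 : sph_interior (cap b r2) x.
  apply: interior_cap => //; first by case/andP: h2 => /ltW -> /= ?; lra.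
  rewrite xb ltr_pdivlMr // -/p2; apply: sq_lt => //.
    by rewrite mulr_ge0 // ltW.
  by rewrite exprMn nn.
have : (sph_interior (cap a r1) `&` sph_interior (cap b r2)) x by split.
by rewrite hdis.
Qed.

Lemma tcap_facts k c r : k_tangent_cap k c r ->
  [/\ sphere c, 0 < r < pi / 2 & exists S : {set 'I_d}, [/\ #|S| = k,
    (forall i, i \notin S -> c 0 i = 0),
    (forall i, i \in S -> `|c 0 i| = sin r) & k%:R * sin r ^+ 2 = 1]].
Proof.
rewrite /k_tangent_cap /is_cap; case=> [[hs [r0 rpi]] [S [hk [hoff hon]]]].
have hon' : forall i, i \in S -> `|c 0 i| = sin r.
  move=> i iS; rewrite (hon i iS) /dist_to_G asinK //.
  have := coord_sq_le c i; rewrite hs -(real_normK (num_real (c 0 i))) => h.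
  rewrite in_itv /=; apply/andP; split; nra.
constructor; [by [] | by rewrite r0 rpi | ].
exists S; split => //.
rewrite -hk -[RHS]hs /dotp (eq_bigr (fun i => if i \in S then sin r ^+ 2 else 0)).
  by rewrite -big_mkcond /= sumr_const mulr_natl.
move=> i _; case: ifP => iS; last by rewrite hoff ?iS // mulr0.
by rewrite -expr2 -(real_normK (num_real (c 0 i))) hon'.
Qed.

Lemma main_sec (k1 k2 : nat) (c1 c2 : 'rV[R]_d) (r1 r2 : R) :
  (2 <= d)%N -> (2 <= k1 <= d)%N -> (2 <= k2 <= d)%N ->
  k_tangent_cap k1 c1 r1 -> k_tangent_cap k2 c2 r2 ->
  refl_orbit (cap c1 r1) <> refl_orbit (cap c2 r2) ->
  packing (refl_orbit (cap c1 r1) `|` refl_orbit (cap c2 r2)) ->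
  (k1%:R + k2%:R - d%:R : R) <= Num.sqrt ((k1%:R - 1) * (k2%:R - 1) : R) - 1.
Proof.
move=> hd hk1 hk2 t1 t2 hneq hpack.
case: (tcap_facts _ _ _ t1) => hs1 hr1 [S1 [hc1 off1 on1 e1]].
case: (tcap_facts _ _ _ t2) => hs2 hr2 [S2 [hc2 off2 on2 e2]].
set s := finset (fun i => c1 0 i * c2 0 i < 0).
set b := reflect_by s c2.
have hsb : sphere b by rewrite /sphere /= /b reflect_dotp reflect_invol.
set m := #|S1 :&: S2|.
set q1 := sin r1; set q2 := sin r2.
have hab : dotp c1 b = m%:R * (q1 * q2).
  rewrite /dotp (eq_bigr (fun i => if i \in S1 :&: S2 then q1 * q2 else 0)).
    by rewrite -big_mkcond /= sumr_const mulr_natl.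
  move=> i _; rewrite /b !mxE inE.
  have -> : c1 0 i * (if c1 0 i * c2 0 i < 0 then - c2 0 i else c2 0 i)
       = `|c1 0 i * c2 0 i|.
    case: ifP => h; first by rewrite ltr0_norm // mulrN.
    by rewrite ger0_norm // leNgt h.
  rewrite normrM inE; case: (boolP (i \in S1)) => i1; case: (boolP (i \in S2)) => i2 /=.
  - by rewrite on1 // on2.
  - by rewrite off2 // normr0 mulr0.
  - by rewrite off1 // normr0 mul0r.
  - by rewrite off1 // normr0 mul0r.
set A := reflect_by finset.set0 @` cap c1 r1.
set B := reflect_by s @` cap c2 r2.
have hA : A = cap c1 r1 by rewrite /A reflect_cap reflect_set0.
have hB : B = cap b r2 by rewrite /B reflect_cap.
have hAB : A <> B.
  move=> hAB; apply: hneq.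
  by rewrite -(orbit_reflect finset.set0 (cap c1 r1)) -/A hAB /B orbit_reflect.
have hdis := hpack A B (or_introl (ex_intro _ _ erefl)) (or_intror (ex_intro _ _ erefl)) hAB.
rewrite hA hB in hdis.
have hsep := sep c1 b r1 r2 hs1 hsb hr1 hr2 hdis.
rewrite hab -/q1 -/q2 in hsep.
have pi0 : 0 < pi :> R by exact: pi_gt0.
have hr1' : -(pi/2) < r1 < pi/2 by case/andP: hr1 => ? ->; rewrite andbT; lra.
have hr2' : -(pi/2) < r2 < pi/2 by case/andP: hr2 => ? ->; rewrite andbT; lra.
have p10 : 0 < cos r1 by exact: cos_gt0_pihalf.
have p20 : 0 < cos r2 by exact: cos_gt0_pihalf.
have q10 : 0 < q1 by exact: sin_gt0_pihalf.
have q20 : 0 < q2 by exact: sin_gt0_pihalf.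
have f1 : cos r1 ^+ 2 = 1 - q1 ^+ 2 by rewrite cos2sin2.
have f2 : cos r2 ^+ 2 = 1 - q2 ^+ 2 by rewrite cos2sin2.
set p1 := cos r1 in hsep p10 f1; set p2 := cos r2 in hsep p20 f2.
set M := (m%:R : R); set K1 := (k1%:R : R); set K2 := (k2%:R : R).
have M0 : 0 <= M by rewrite /M ler0n.
have hm : K1 + K2 - d%:R <= M.
  have : (k1 + k2 <= m + d)%N.
    rewrite -hc1 -hc2 -cardsUI /m addnC leq_add2l.
    by apply: leq_trans (max_card _) _; rewrite card_ord.
  move=> hn.
  have : ((k1 + k2)%:R <= (m + d)%:R :> R) by rewrite ler_nat.
  rewrite !natrD -/K1 -/K2 -/M; lra.
have K11 : 1 <= K1 by rewrite /K1 ler1n; case/andP: hk1 => /ltnW.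
have K21 : 1 <= K2 by rewrite /K2 ler1n; case/andP: hk2 => /ltnW.
set X := (K1 - 1) * (K2 - 1).
have X0 : 0 <= X by rewrite mulr_ge0 // subr_ge0.
have w0 : 0 <= Num.sqrt X by exact: sqrtr_ge0.
have ww : Num.sqrt X ^+ 2 = X by rewrite sqr_sqrtr.
have h1 : (M + 1) * (q1 * q2) <= p1 * p2 by lra.
have h2 : ((M + 1) * (q1 * q2)) ^+ 2 <= (p1 * p2) ^+ 2.
  rewrite ler_pXn2r // ?qualifE /= ?mulr_ge0 ?addr_ge0 // ltW //.
have h3 : (M + 1) ^+ 2 <= X.
  have -> : X = (p1 * p2) ^+ 2 * (K1 * K2).
    rewrite /X exprMn f1 f2.
    have -> : K1 - 1 = K1 * (1 - q1 ^+ 2) by rewrite mulrBr mulr1 e1.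
    have -> : K2 - 1 = K2 * (1 - q2 ^+ 2) by rewrite mulrBr mulr1 e2.
    ring.
  have -> : (M + 1) ^+ 2 = ((M + 1) * (q1 * q2)) ^+ 2 * (K1 * K2).
    have -> : ((M + 1) * (q1 * q2)) ^+ 2 * (K1 * K2)
        = (M + 1) ^+ 2 * (K1 * q1 ^+ 2) * (K2 * q2 ^+ 2) by ring.
    by rewrite e1 e2 !mulr1.
  by rewrite ler_wpM2r // mulr_ge0 // (le_trans ler01).
have h4 : M + 1 <= Num.sqrt X.
  by rewrite -(@ler_pXn2r _ 2%N) // ?qualifE /= ?addr_ge0 // ww.
lra.
Qed.
End S.

Theorem lemma5 (R : realType) (d k1 k2 : nat) (c1 c2 : 'rV[R]_d) (r1 r2 : R) :
  (2 <= d)%N -> (2 <= k1 <= d)%N -> (2 <= k2 <= d)%N ->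
  k_tangent_cap k1 c1 r1 -> k_tangent_cap k2 c2 r2 ->
  refl_orbit (cap c1 r1) <> refl_orbit (cap c2 r2) ->
  packing (refl_orbit (cap c1 r1) `|` refl_orbit (cap c2 r2)) ->
  (k1%:R + k2%:R - d%:R : R) <= Num.sqrt ((k1%:R - 1) * (k2%:R - 1) : R) - 1.
Proof. exact: main_sec. Qed.
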